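(* Let $\lambda_{\min}>0$ and define $$t^*=\min_{k=0,1,\dots,K}\frac{1-\lambda_{\min}\,\mathbf{G}_{k,:}\mathbf{C}^{-1}\mathbf{F}\mathbf{1}}{\mathbf{G}_{k,:}\mathbf{C}^{-1}\tilde{\mathbf{h}}}.$$ If $t^*\ge 0$, then $t^*$ is the optimal value of problem (P). If $t^*<0$, then (P) is infeasible (the network cannot support per-UE arrival rate $\lambda_{\min}$).
   Context: Consider a rooted tree whose root is the donor (vertex $0$), whose other internal vertices are IAB nodes $1,\dots,K$, and whose leaves are $M$ user equipments (UEs); vertices $0,\dots,K$ are called base stations (BSs), and every BS has at least one child. Every non-root vertex $v$ has a unique parent, and the edge from its parent to $v$ is indexed by $v$; let $\mathcal{E}$ be the set of edges. For each UE $m$, $\mathsf{R}(m)$ is the set of edges on the path from $0$ to $m$, and $h_m=|\mathsf{R}(m)|$. The routing matrix $\mathbf{F}\in\{0,1\}^{|\mathcal{E}|\times M}$ has $F_{v,m}=1$ iff $v\in\mathsf{R}(m)$. Let $\mathbf{C}=\mathrm{diag}(c_v)_{v\in\mathcal{E}}$ with all $c_v>0$. Let $\mathbf{G}\in\{0,1\}^{(K+1)\times|\mathcal{E}|}$ (rows indexed by BSs $0,\dots,K$) be a scheduling matrix in which every row and every column contains at least one $1$ (e.g. the half-duplex matrix $\mathbf{G}_{\mathrm{HD}}$ with $[\mathbf{G}_{\mathrm{HD}}]_{k,v}=1$ iff BS $k$ is the parent or the child of edge $v$, or the full-duplex matrix $\mathbf{G}_{\mathrm{FD}}$ with $[\mathbf{G}_{\mathrm{FD}}]_{k,v}=1$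 iff BS $k$ is the parent of edge $v$). $\mathbf{G}_{k,:}$ denotes the row of $\mathbf{G}$ for BS $k$; $\mathbf{1}$ denotes the all-ones vector. The vector $\tilde{\mathbf{h}}\in\mathbb{R}^{|\mathcal{E}|}$ is defined by $\tilde h_v=\max\{h_m: v\in\mathsf{R}(m)\}$. Problem (P): maximize $t$ over $(t,\boldsymbol{\lambda},\boldsymbol{\mu})\in\mathbb{R}\times\mathbb{R}^M\times\mathbb{R}^{|\mathcal{E}|}$ subject to $\boldsymbol{\lambda}\ge\lambda_{\min}\mathbf{1}$, $\mathbf{0}\le\boldsymbol{\mu}\le\mathbf{1}$, $t\ge0$, $\mathbf{G}\boldsymbol{\mu}\le\mathbf{1}$ (all componentwise), and $c_v\mu_v-(\mathbf{F}\boldsymbol{\lambda})_v\ge t\,h_m$ for every UE $m$ and every edge $v\in\mathsf{R}(m)$. *)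

(* Defs.v *)
From HB Require Import structures.
From mathcomp Require Import all_boot all_order all_algebra.
Set Implicit Arguments. Unset Strict Implicit. Unset Printing Implicit Defensive.
Import Order.TTheory GRing.Theory Num.Theory.
Local Open Scope ring_scope.

(* Vertices: BSs 0..K (inl k, donor = inl ord0) and UEs 0..M-1 (inr m). *)
Definition vtx (K M : nat) := ('I_K.+1 + 'I_M)%type.

(* Edges are indexed by the non-root vertices. *)
Definition edge (K M : nat) := {v : vtx K M | v != inl ord0}.

(* parent map [par : vtx K M -> 'I_K.+1] (its value at the root is irrelevant);
   [up par] is the parent map on BSs, stopping at the donor. *)
Definition up (K M : nat) (par : vtx K M -> 'I_K.+1) (j : 'I_K.+1) : 'I_K.+1 :=
  if j == ord0 then ord0 else par (inl j).

(* Rooted tree: every BS reaches the donor along parents; every BS has a child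
   (UEs are leaves by construction since parents are BSs). *)
Definition is_tree (K M : nat) (par : vtx K M -> 'I_K.+1) : Prop :=
  (forall k : 'I_K.+1, exists n : nat, iter n (up par) k = ord0) /\
  (forall k : 'I_K.+1, exists v : vtx K M, v != inl ord0 /\ par v = k).

(* e \in R(m): edge e is on the path from the donor to UE m. *)
Definition inRoute (K M : nat) (par : vtx K M -> 'I_K.+1) (e : edge K M) (m : 'I_M)
  : bool :=
  match val e with
  | inl j => j \in traject (up par) (par (inr m)) K.+1
  | inr m' => m' == m
  end.

Definition hops (K M : nat) (par : vtx K M -> 'I_K.+1) (m : 'I_M) : nat :=
  #|[pred e : edge K M | inRoute par e m]|.

Definition htilde (K M : nat) (par : vtx K M -> 'I_K.+1) (e : edge K M) : nat :=
  \max_(m | inRoute par e m) hops par m.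

Definition F1 (K M : nat) (par : vtx K M -> 'I_K.+1) (e : edge K M) : nat :=
  #|[pred m : 'I_M | inRoute par e m]|.

Definition Flam (R : realFieldType) (K M : nat) (par : vtx K M -> 'I_K.+1)
  (lam : 'I_M -> R) (e : edge K M) : R :=
  \sum_(m | inRoute par e m) lam m.

Definition sched_ok (K M : nat) (G : 'I_K.+1 -> edge K M -> bool) : Prop :=
  (forall k, exists e, G k e) /\ (forall e, exists k, G k e).

Definition feasibleP (R : realFieldType) (K M : nat) (par : vtx K M -> 'I_K.+1)
  (c : edge K M -> R) (G : 'I_K.+1 -> edge K M -> bool) (lam_min : R)
  (t : R) (lam : 'I_M -> R) (mu : edge K M -> R) : Prop :=
  (forall m, lam_min <= lam m) /\
  (forall e, 0 <= mu e <= 1) /\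
  0 <= t /\
  (forall k, \sum_(e | G k e) mu e <= 1) /\
  (forall m e, inRoute par e m ->
     t * (hops par m)%:R <= c e * mu e - Flam par lam e).

Definition is_opt_valP (R : realFieldType) (K M : nat) (par : vtx K M -> 'I_K.+1)
  (c : edge K M -> R) (G : 'I_K.+1 -> edge K M -> bool) (lam_min : R) (t : R) : Prop :=
  (exists lam mu, feasibleP par c G lam_min t lam mu) /\
  (forall t' lam mu, feasibleP par c G lam_min t' lam mu -> t' <= t).

(* ratio for BS k:
   (1 - lam_min G_{k,:} C^{-1} F 1) / (G_{k,:} C^{-1} htilde) *)
Definition ratio (R : realFieldType) (K M : nat) (par : vtx K M -> 'I_K.+1)
  (c : edge K M -> R) (G : 'I_K.+1 -> edge K M -> bool) (lam_min : R) (k : 'I_K.+1) : R :=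
  (1 - lam_min * \sum_(e | G k e) (F1 par e)%:R / c e) /
  (\sum_(e | G k e) (htilde par e)%:R / c e).

Definition tstar (R : realFieldType) (K M : nat) (par : vtx K M -> 'I_K.+1)
  (c : edge K M -> R) (G : 'I_K.+1 -> edge K M -> bool) (lam_min : R) : R :=
  \big[Order.min/ratio par c G lam_min ord0]_(k < K.+1) ratio par c G lam_min k.

(* Main.v *)
Require Import Defs.
From HB Require Import structures.
From mathcomp Require Import all_boot all_order all_algebra.
Import Order.TTheory GRing.Theory Num.Theory.
Local Open Scope ring_scope.

Lemma route_exists (K M : nat) (par : vtx K M -> 'I_K.+1) :
  is_tree par -> forall e : edge K M, exists m, inRoute par e m.
Proof.
move=> [Htr Hch].
pose up' := up par.
have toR : forall x j, fconnect up' x j -> j \in traject up' x K.+1.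
  move=> x j; rewrite fconnect_orbit /orbit => /trajectP [i Hi ->].
  apply/trajectP; exists i => //; apply: leq_trans Hi _.
  by rewrite /order -[X in (_ <= X)%N](card_ord K.+1) max_card.
have Htr' : forall j, exists n, iter n up' j == ord0.
  by move=> j; have [n Hn] := Htr j; exists n; apply/eqP.
pose d j := ex_minn (Htr' j).
pose S := [pred j | [exists m : 'I_M, fconnect up' (par (inr m)) j]].
have allS : forall j, j \in S.
  apply/forallP; apply/negPn/negP; rewrite negb_forall => /existsP [j0 Hj0].
  pose j := [arg max_(i > j0 | i \notin S) d i].
  case: (@arg_maxnP _ j0 (fun i => i \notin S) d Hj0) => jm Hjm Hmax.
  have [v [Hv Hpv]] := Hch jm.
  move: Hv Hpv; case: v => [j'|m] Hv Hpv.
  - have Hj' : j' != ord0 by apply: contra Hv => /eqP ->.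
    have upj : up' j' = jm by rewrite /up' /up (negbTE Hj').
    case Sj': (j' \in S).
    + case/negP: Hjm; rewrite inE; apply/existsP.
      move: Sj'; rewrite inE => /existsP [m Hm]; exists m.
      by apply: connect_trans Hm _; rewrite -upj fconnect1.
    + have := Hmax j' (negbT Sj').
      rewrite /d; case: ex_minnP => a Ha Hmina.
      case: ex_minnP => b Hb Hminb.
      case: b Hb Hminb => [|b] Hb Hminb.
        by move: Hb => /=; rewrite (negbTE Hj').
      move=> Hle; have Hab : (a <= b)%N by apply: Hmina; rewrite -upj -iterSr.
      by move: (leq_trans Hle Hab); rewrite ltnn.
  - case/negP: Hjm; rewrite inE; apply/existsP; exists m.
    by rewrite Hpv connect0.
case=> [[j|m] He] /=.
- have := allS j; rewrite inE => /existsP [m Hm]; exists m.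
  by rewrite /inRoute /=; apply: toR.
- by exists m; rewrite /inRoute /=.
Qed.

Section Main.
Variables (R : realFieldType) (K M : nat) (par : vtx K M -> 'I_K.+1)
  (c : edge K M -> R) (G : 'I_K.+1 -> edge K M -> bool) (lam_min : R).

Lemma htilde_ge e m : inRoute par e m -> (hops par m <= htilde par e)%N.
Proof. by move=> H; apply: (@leq_bigmax_cond _ (fun m => inRoute par e m)). Qed.

Lemma hops_pos e m : inRoute par e m -> (0 < hops par m)%N.
Proof. by move=> H; apply/card_gt0P; exists e. Qed.

Lemma Flam_ge (lam : 'I_M -> R) e : (forall m, lam_min <= lam m) ->
  lam_min * (F1 par e)%:R <= Flam par lam e.
Proof.
move=> H; rewrite /Flam /F1 mulr_natr -(sumr_const [pred m | inRoute par e m]).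
by apply: ler_sum => m _.
Qed.

Lemma Flam_const e : Flam par (fun=> lam_min) e = lam_min * (F1 par e)%:R.
Proof.
by rewrite /Flam /F1 mulr_natr -(sumr_const [pred m | inRoute par e m]).
Qed.

Lemma sum_split k (t : R) :
  \sum_(e | G k e) (lam_min * (F1 par e)%:R + t * (htilde par e)%:R) / c e =
  lam_min * \sum_(e | G k e) (F1 par e)%:R / c e +
  t * \sum_(e | G k e) (htilde par e)%:R / c e.
Proof.
rewrite !mulr_sumr -big_split; apply: eq_bigr => e _.
by rewrite mulrDl !mulrA.
Qed.

End Main.
Arguments htilde_ge {K M par e m}.
Arguments hops_pos {K M par e m}.
Arguments Flam_ge {R K M} par {lam_min lam} e.
Arguments Flam_const {R K M} par lam_min e.
Arguments sum_split {R K M} par c G lam_min k t.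

Theorem theorem1 (R : realFieldType) (K M : nat)
  (par : vtx K M -> 'I_K.+1) (c : edge K M -> R)
  (G : 'I_K.+1 -> edge K M -> bool) (lam_min : R) :
  is_tree par ->
  (forall e, 0 < c e) ->
  sched_ok G ->
  0 < lam_min ->
  (0 <= tstar par c G lam_min -> is_opt_valP par c G lam_min (tstar par c G lam_min)) /\
  (tstar par c G lam_min < 0 ->
     ~ exists t lam mu, feasibleP par c G lam_min t lam mu).
Proof.
move=> Htree Hc [Hrow Hcol] Hlam.
have Hroute := @route_exists K M par Htree.
pose S1 k := \sum_(e | G k e) (F1 par e)%:R / c e.
pose S2 k := \sum_(e | G k e) (htilde par e)%:R / c e.
have S2pos : forall k, 0 < S2 k.
  move=> k; have [e He] := Hrow k; have [m Hm] := Hroute e.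
  rewrite /S2 (bigD1 e) //=.
  apply: (@lt_le_trans _ _ ((htilde par e)%:R / c e)).
    apply: divr_gt0 => //; rewrite ltr0n; exact: (leq_trans (hops_pos Hm) (htilde_ge Hm)).
  by rewrite lerDl sumr_ge0 // => i _; rewrite divr_ge0 // ltW.
have ratioE : forall k, Defs.ratio par c G lam_min k = (1 - lam_min * S1 k) / S2 k by [].
have ub : forall t lam mu, feasibleP par c G lam_min t lam mu ->
    t <= tstar par c G lam_min.
  move=> t lam mu [Hl [Hmu [Ht [Hsum Hcon]]]].
  have Hk : forall k, t <= Defs.ratio par c G lam_min k.
    move=> k; rewrite ratioE ler_pdivlMr // lerBrDl.
    apply: le_trans (Hsum k).
    rewrite -(sum_split par c G lam_min k t); apply: ler_sum => e _.
    rewrite ler_pdivrMr // mulrC.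
    have [m Hm] := Hroute e.
    have X0 : 0 <= c e * mu e - Flam par lam e.
      apply: le_trans (Hcon m e Hm); exact: mulr_ge0.
    have : t * (htilde par e)%:R <= c e * mu e - Flam par lam e.
      rewrite /htilde; apply: (big_ind (fun x : nat => t * x%:R <= c e * mu e - Flam par lam e)).
      - by rewrite mulr0.
      - move=> x y Hx Hy; rewrite /maxn; by case: ifP.
      - by move=> i Hi; apply: Hcon.
    have := Flam_ge par e Hl.
    move=> H1 H2; rewrite (mulrC _ lam_min) (mulrC (mu e)); have := lerD H1 H2; by rewrite [X in _ <= X]addrC subrK.
  rewrite /tstar; apply: (big_ind (fun x => t <= x)) => //.
  by move=> x y Hx Hy; rewrite le_min Hx Hy.
split.
- move=> Hts; split; last by move=> t' lam mu /ub.
  set ts := tstar par c G lam_min.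
  have tsle : forall k, ts <= Defs.ratio par c G lam_min k.
    by move=> k; apply: bigmin_le.
  pose mu e := (lam_min * (F1 par e)%:R + ts * (htilde par e)%:R) / c e.
  have mu0 : forall e, 0 <= mu e.
    move=> e; apply: divr_ge0; last exact: ltW; apply: addr_ge0; apply: mulr_ge0 => //; exact: ltW.
  have rowle : forall k, \sum_(e | G k e) mu e <= 1.
    move=> k; rewrite /mu (sum_split par c G lam_min k ts).
    have := tsle k; rewrite ratioE ler_pdivlMr // /S1 /S2 => H.
    by rewrite -lerBrDl.
  exists (fun=> lam_min), mu; split; first by [].
  split.
    move=> e; rewrite mu0 /=; have [k Hk] := Hcol e.
    apply: le_trans (rowle k); rewrite (bigD1 e) //= lerDl.
    by apply: sumr_ge0 => i _.
  split; first by [].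
  split; first by [].
  move=> m e Hm; rewrite (Flam_const par lam_min e) /mu [c e * _]mulrC divfK ?gt_eqF // addrAC subrr add0r.
  by apply: ler_wpM2l => //; rewrite ler_nat htilde_ge.
- move=> Hneg [t [lam [mu Hf]]].
  have := ub _ _ _ Hf; case: Hf => _ [_ [Ht _]] H.
  by have := le_lt_trans (le_trans Ht H) Hneg; rewrite ltxx.
Qed.
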